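(* Let $h\ge 2$, $1\le t\le 2h-1$, and let $f_1,\dots,f_t$ be positive integers with $f_1+\dots+f_t\le 2h$. For a positive integer $n$, let $R^{\mathrm{Dist}}(n)$ be the largest integer $q\ge 0$ such that there exist $qt$ pairwise distinct elements $d_1,\dots,d_{qt}\in B$ with $f_1d_{jt+1}+\dots+f_td_{jt+t}=n$ for every $0\le j\le q-1$. Then with probability $1$, $R^{\mathrm{Dist}}(n)\le 4h$ for all sufficiently large $n$.
   Context: Fix an integer $h\ge 2$. Let $B$ be a random set of positive integers in which the events $\{n\in B\}$, $n=1,2,\dots$, are mutually independent and $\mathbb{P}(n\in B)=n^{-\frac{4h-3}{4h-1}}$. *)

(* Defs.v *)
From HB Require Import structures.
From mathcomp Require Import all_boot all_order all_algebra.
From mathcomp Require Import all_classical all_reals all_analysis.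
Set Implicit Arguments. Unset Strict Implicit. Unset Printing Implicit Defensive.
Import Order.TTheory GRing.Theory Num.Theory.
Local Open Scope classical_set_scope.
Local Open Scope ring_scope.

Definition mutually_independent {d} {T : measurableType d} {R : realType}
  (P : probability T R) (E : nat -> set T) : Prop :=
  forall s : seq nat, uniq s ->
    P (\big[setI/setT]_(i <- s) E i) = (\prod_(i <- s) P (E i))%E.

(* q is admissible for n: there are q*t pairwise distinct elements
   d_0,...,d_{qt-1} of B with sum_{i<t} f_i d_{jt+i} = n for all j < q
   (0-indexed version of d_{jt+1},...,d_{jt+t}). *)
Definition dist_rep (B : set nat) (t : nat) (f : nat -> nat) (n q : nat) : Prop :=
  exists dd : nat -> nat,
    {in [pred k | (k < q * t)%N] &, injective dd} /\
    (forall k, (k < q * t)%N -> B (dd k)) /\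
    (forall j, (j < q)%N -> (\sum_(i < t) f i * dd (j * t + i))%N = n).

(* For n >= 1 and t >= 1, f_i >= 1 and
   B a set of positive integers, every admissible q satisfies q <= n
   (qt distinct positive integers, each <= n), and q = 0 is admissible,
   so the maximum over q < n+1 is the largest admissible q. *)
Definition RDist (B : set nat) (t : nat) (f : nat -> nat) (n : nat) : nat :=
  (\max_(q < n.+1 | `[< dist_rep B t f n q >]) q)%N.

(* Main.v *)
Require Import Defs.
From HB Require Import structures.
From mathcomp Require Import all_boot all_order all_algebra.
From mathcomp Require Import all_classical all_reals all_analysis.
From mathcomp Require Import ring lra zify.
Import Order.TTheory GRing.Theory Num.Theory.
Local Open Scope classical_set_scope.
Local Open Scope ring_scope.
Lemma subXX_le (R : realType) (x y : R) (m : nat) : 0 <= y -> y <= x ->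
  x ^+ m - y ^+ m <= m%:R * x ^+ m.-1 * (x - y).
Proof.
move=> y0 yx; rewrite subrXX mulrC.
have xy0 : 0 <= x - y by rewrite subr_ge0.
rewrite ler_wpM2r //.
have -> : m%:R * x ^+ m.-1 = \sum_(i < m) x ^+ m.-1 by rewrite sumr_const card_ord mulr_natl.
apply: ler_sum => i _.
have x0 : 0 <= x by apply: le_trans yx.
have -> : x ^+ m.-1 = x ^+ (m.-1 - i) * x ^+ i.
  rewrite -exprD subnK //. by have := ltn_ord i; case: m i => //.
by rewrite ler_wpM2l ?exprn_ge0 // lerXn2r // nnegrE.
Qed.

Definition uu (R : realType) (m x : nat) : R := (x%:R : R) `^ (m%:R^-1).

Lemma uu_ge0 (R : realType) m x : 0 <= uu R m x.
Proof. exact: powR_ge0. Qed.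

Lemma uu_pow (R : realType) m x : (0 < m)%N -> uu R m x ^+ m = x%:R.
Proof.
move=> m0; rewrite /uu -powR_mulrn ?powR_ge0 // -powRrM mulVf ?powRr1 //.
by rewrite pnatr_eq0 -lt0n.
Qed.

Lemma uu_mono (R : realType) m x y : (x <= y)%N -> uu R m x <= uu R m y.
Proof.
move=> xy; apply: ge0_ler_powR; rewrite ?nnegrE ?invr_ge0 ?ler0n ?ler_nat //.
Qed.

Lemma uu0 (R : realType) m : (0 < m)%N -> uu R m 0 = 0.
Proof. by move=> m0; rewrite /uu powR0 // invr_eq0 pnatr_eq0 -lt0n. Qed.

Lemma uu1 (R : realType) m : uu R m 1 = 1.
Proof. by rewrite /uu powR1. Qed.

Lemma uu_ge1 (R : realType) m x : (1 <= x)%N -> 1 <= uu R m x.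
Proof. by move=> x1; rewrite -(uu1 R m) uu_mono. Qed.

Lemma pow_uu (R : realType) m x : (0 < m)%N ->
  (x%:R : R) `^ (- ((m - 2)%:R / m%:R)) = (uu R m x ^+ (m - 2))^-1.
Proof.
move=> m0; rewrite /uu -powR_invn ?powR_ge0 // -powRrM; congr (_ `^ _).
by rewrite mulrN mulrC.
Qed.

Lemma G1core (R : realType) (m : nat) (x y : R) : (2 < m)%N -> 0 <= y -> y <= x -> 1 <= x ->
  x ^+ m - y ^+ m = 1 -> 1 <= m%:R * x ^+ (m - 2) * (x ^+ 2 - y ^+ 2).
Proof.
move=> m2 y0 yx x1 d1.
have := @subXX_le R x y m y0 yx; rewrite d1.
have -> : x ^+ m.-1 = x ^+ (m - 2) * x by rewrite -exprSr; congr (_ ^+ _); lia.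
have X0 : 0 <= x ^+ (m - 2) by rewrite exprn_ge0 // (le_trans _ x1).
have m0 : 0 <= (m%:R : R) by [].
move: (x ^+ (m - 2)) X0 => X X0 H.
apply: (le_trans H).
have -> : m%:R * (X * x) * (x - y) = (m%:R * X) * (x * (x - y)) by ring.
rewrite ler_wpM2l ?mulr_ge0 //.
by rewrite !expr2; nra.
Qed.

Lemma G1 (R : realType) (m : nat) (x y : R) : (2 < m)%N -> 0 <= y -> y <= x -> 1 <= x ->
  x ^+ m - y ^+ m = 1 -> (x ^+ (m - 2))^-1 <= m%:R * (x ^+ 2 - y ^+ 2).
Proof.
move=> m2 y0 yx x1 d1; have H := @G1core R m x y m2 y0 yx x1 d1.
have X0 : 0 < x ^+ (m - 2) by rewrite exprn_gt0 // (lt_le_trans _ x1).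
rewrite -[_^-1]mul1r ler_pdivrMr //.
by apply: (le_trans H); rewrite le_eqVlt; apply/orP; left; apply/eqP; ring.
Qed.

Lemma G2 (R : realType) (m : nat) (x y : R) : (2 < m)%N -> 1 <= y -> y <= x ->
  x ^+ m - y ^+ m = 1 -> (x ^+ (m + 2))^-1 <= m%:R * ((y ^+ 2)^-1 - (x ^+ 2)^-1).
Proof.
move=> m2 y1 yx d1.
have y0 : 0 <= y by apply: le_trans y1.
have x1 : 1 <= x by apply: le_trans yx.
have A := @G1core R m x y m2 y0 yx x1 d1.
have -> : x ^+ (m + 2) = x ^+ (m - 2) * (x ^+ 2 * x ^+ 2).
  by rewrite -!exprD; congr (_ ^+ _); lia.
have X0 : 0 < x ^+ (m - 2) by rewrite exprn_gt0 // (lt_le_trans _ x1).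
have a1 : 1 <= x ^+ 2 by rewrite expr2; nra.
have b1 : 1 <= y ^+ 2 by rewrite expr2; nra.
have ba : y ^+ 2 <= x ^+ 2 by rewrite !expr2; nra.
move: (x ^+ (m - 2)) (x ^+ 2) (y ^+ 2) X0 a1 b1 ba A => X a b X0 a1 b1 ba A.
have a0 : 0 < a by apply: lt_le_trans a1.
have b0 : 0 < b by apply: lt_le_trans b1.
apply: (@le_trans _ _ (m%:R * (a - b) * (a * a)^-1)).
  have h : 0 <= (a * a)^-1 by rewrite invr_ge0 mulr_ge0 // ltW.
  rewrite invfM ler_wpM2r //.
  rewrite -[_^-1]mul1r ler_pdivrMr //.
  by apply: (le_trans A); rewrite le_eqVlt; apply/orP; left; apply/eqP; ring.
have -> : b^-1 - a^-1 = (a - b) * (a * b)^-1.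
  by field; rewrite ?gt_eqF.
rewrite mulrA ler_wpM2l ?mulr_ge0 ?subr_ge0 //.
by rewrite lef_pV2 ?posrE ?mulr_gt0 // ler_wpM2l // ltW.
Qed.

Lemma S1 (R : realType) (m : nat) n : (2 < m)%N ->
  \sum_(1 <= d < n.+1) (uu R m d ^+ (m - 2))^-1 <= m%:R * uu R m n ^+ 2.
Proof.
move=> m2; have m0 : (0 < m)%N by lia.
elim: n => [|n IH]; first by rewrite big_geq // mulr_ge0 // sqr_ge0.
rewrite big_nat_recr //=.
have G := @G1 R m (uu R m n.+1) (uu R m n) m2 (uu_ge0 _ _ _) (@uu_mono R m _ _ (leqnSn n))
  (@uu_ge1 R m _ (ltn0Sn n)).
rewrite !uu_pow // -natrB // subSnn in G.
have {}G := G erefl.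
apply: (le_trans (lerD IH G)).
by rewrite -mulrDr addrC subrK.
Qed.

Lemma S2 (R : realType) (m : nat) k : (2 < m)%N ->
  \sum_(2 <= n < k.+2) (uu R m n ^+ (m + 2))^-1 <= m%:R * (1 - (uu R m k.+1 ^+ 2)^-1).
Proof.
move=> m2; have m0 : (0 < m)%N by lia.
elim: k => [|k IH]; first by rewrite big_geq // uu1 expr1n invr1 subrr mulr0.
rewrite big_nat_recr //=.
have G := @G2 R m (uu R m k.+2) (uu R m k.+1) m2 (@uu_ge1 R m _ (ltn0Sn k)) (@uu_mono R m _ _ (leqnSn _)).
rewrite !uu_pow // -natrB // subSnn in G.
have {}G := G erefl.
apply: (le_trans (lerD IH G)).
by rewrite -mulrDr subrKA.
Qed.

Definition pp (R : realType) m (x : nat) : R := (uu R m x ^+ (m - 2))^-1.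

Definition valid n t (f : nat -> nat) (g : {ffun 'I_t -> 'I_n.+1}) : bool :=
  ((\sum_(i < t) f i * g i)%N == n) && [forall i, (0 < g i)%N].

Definition mu (R : realType) m n t f : R :=
  \sum_(g : {ffun 'I_t -> 'I_n.+1} | valid n t f g) \prod_(i < t) pp R m (g i).

Lemma pp_ge0 R m x : 0 <= pp R m x.
Proof. by rewrite /pp invr_ge0 exprn_ge0 // uu_ge0. Qed.

Lemma exists_big n t (f : nat -> nat) (g : {ffun 'I_t -> 'I_n.+1}) : (1 <= n)%N -> (1 <= t)%N ->
  (0 < \sum_(i < t) f i)%N ->
  valid n t f g -> exists i : 'I_t, (n <= t * (\sum_(i < t) f i) * g i)%N.
Proof.
move=> n1 t1 F1 /andP[/eqP sg _].
apply/existsP; apply: contraT; rewrite negb_exists => /forallP H.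
set F := (\sum_(i < t) f i)%N in H F1.
have key : (t * F * n <= F * (n - 1))%N.
  rewrite -{1}sg big_distrr /= /F big_distrl /=; apply: leq_sum => i _.
  have := H i; rewrite -ltnNge => Hi.
  have -> : (t * F * (f i * g i) = f i * (t * F * g i))%N by ring.
  by rewrite leq_mul2l; apply/orP; right; lia.
move: key; rewrite -/F; nia.
Qed.

Lemma pp_big (R : realType) m n c x : (2 < m)%N -> (1 <= c)%N -> (1 <= x)%N -> (1 <= n)%N ->
  (n <= c * x)%N -> pp R m x <= (c%:R : R) ^+ (m - 2) * pp R m n.
Proof.
move=> m2 c1 x1 n1 ncx.
have m0 : (0 < m)%N by lia.
have ux : 0 < uu R m x by apply: lt_le_trans (uu_ge1 R m x x1).
have un : 0 < uu R m n by apply: lt_le_trans (uu_ge1 R m n n1).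
have uc : uu R m c <= c%:R.
  rewrite /uu ler1_powR ?ler1n // invf_le1 ?ltr0n ?ler1n //; lia.
have h1 : uu R m n <= c%:R * uu R m x.
  apply: (le_trans (uu_mono R m _ _ ncx)).
  rewrite /uu natrM powRM ?ler0n // -/(uu R m c) -/(uu R m x).
  by rewrite ler_wpM2r // ltW.
have h2 : uu R m n ^+ (m - 2) <= (c%:R * uu R m x) ^+ (m - 2).
  by rewrite lerXn2r // nnegrE ?mulr_ge0 // ltW.
rewrite exprMn in h2.
have C0 : 0 < (c%:R : R) ^+ (m - 2) by rewrite exprn_gt0 // ltr0n.
have A0 : 0 < uu R m x ^+ (m - 2) by rewrite exprn_gt0.
have B0 : 0 < uu R m n ^+ (m - 2) by rewrite exprn_gt0.
rewrite /pp -[X in _ <= X]invrK invfM invrK lef_pV2 ?posrE ?mulr_gt0 ?invr_gt0 //.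
by rewrite mulrC ler_pdivrMr // mulrC.
Qed.

Lemma sum_ord_pos (R : realType) n (F : nat -> R) :
  \sum_(x < n.+1 | (0 < x)%N) F x = \sum_(1 <= d < n.+1) F d.
Proof.
rewrite -(big_mkord (fun x => (0 < x)%N)) big_ltn_cond //=.
rewrite big_nat_cond [RHS]big_nat_cond; apply: eq_bigl => x.
by case: x => [|x] //=; rewrite !andbT.
Qed.

Lemma sum_off_i (R : realType) m n t (f : nat -> nat) (i : 'I_t) : (0 < f i)%N ->
  \sum_(g : {ffun 'I_t -> 'I_n.+1} | valid n t f g)
     \prod_(j < t) (if j == i then 1 else pp R m (g j))
  <= (\sum_(1 <= d < n.+1) pp R m d) ^+ t.-1.
Proof.
move=> fi0.
set G := fun g : {ffun 'I_t -> 'I_n.+1} => \prod_(j < t) (if j == i then 1 else pp R m (g j)).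
pose h := fun g : {ffun 'I_t -> 'I_n.+1} => ([ffun j => if j == i then ord0 else g j] : {ffun 'I_t -> 'I_n.+1}).
have Gh : forall g, G (h g) = G g.
  move=> g; rewrite /G; apply: eq_bigr => j _; rewrite ffunE.
  by case: eqP.
have hinj : {in [set g | valid n t f g]%SET &, injective h}.
  move=> g1 g2; rewrite !inE => /andP[/eqP s1 _] /andP[/eqP s2 _] eqh.
  have off : forall j, j != i -> g1 j = g2 j.
    move=> j ji; have := congr1 (fun g : {ffun 'I_t -> 'I_n.+1} => g j) eqh; rewrite /h !ffunE.
    by rewrite (negbTE ji).
  apply/ffunP => j; case: (eqVneq j i) => [->|ji]; last exact: off.
  rewrite (bigD1 i) //= in s1; rewrite (bigD1 i) //= in s2.
  rewrite (eq_bigr (fun j : 'I_t => f j * g2 j)%N) in s1; last first.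
    by move=> k ki; rewrite off.
  apply: val_inj; apply/eqP; rewrite -(eqn_pmul2l fi0).
  by rewrite -(eqn_add2r (\sum_(k < t | k != i) f k * g2 k)%N) s1 s2.
pose Q := fun (j : 'I_t) (x : 'I_n.+1) => if j == i then x == ord0 else (0 < x)%N.
have hfam : forall g, g \in [set g | valid n t f g]%SET -> h g \in family Q.
  move=> g; rewrite inE => /andP[_ /forallP pos].
  apply/familyP => j; rewrite /Q ffunE; case: eqP => // _; exact: pos.
have G0 : forall g, 0 <= G g.
  by move=> g; apply: prodr_ge0 => j _; case: eqP => _ //; exact: pp_ge0.
have -> : \sum_(g : {ffun 'I_t -> 'I_n.+1} | valid n t f g) G g
         = \sum_(g in [set g | valid n t f g]%SET) G (h g).
  apply: eq_big => [g|g _]; first by rewrite inE.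
  by rewrite Gh.
rewrite -big_imset //.
apply: (@le_trans _ _ (\sum_(y in family Q) G y)).
  rewrite big_mkcond [X in _ <= X]big_mkcond /=; apply: ler_sum => y _.
  case: ifP => [/imsetP[g gv ->]|_]; first by rewrite hfam.
  by case: ifP.
rewrite (_ : \sum_(y in family Q) G y = \prod_(j < t) \sum_(x | Q j x) (if j == i then 1 else pp R m x)); last first.
  by rewrite bigA_distr_big_dep.
rewrite (bigD1 i) //= /Q eqxx big_pred1_eq.
rewrite (eq_bigr (fun _ => \sum_(1 <= d < n.+1) pp R m d)); last first.
  move=> j ji; rewrite (negbTE ji).
  by rewrite (eq_bigr (fun x : 'I_n.+1 => pp R m x)) ?sum_ord_pos.
by rewrite prodr_const cardC1 card_ord mul1r.
Qed.

Lemma mu_bound1 (R : realType) m n t (f : nat -> nat) : (2 < m)%N -> (1 <= n)%N -> (1 <= t)%N ->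
  (forall i, (i < t)%N -> (0 < f i)%N) ->
  mu R m n t f <= t%:R * (((t * \sum_(i < t) f i)%N%:R : R) ^+ (m - 2) * pp R m n)
                  * (\sum_(1 <= d < n.+1) pp R m d) ^+ t.-1.
Proof.
move=> m2 n1 t1 fpos.
set c := (t * \sum_(i < t) f i)%N.
have F1 : (0 < \sum_(i < t) f i)%N.
  case: t t1 fpos c => // t _ fpos _; rewrite big_ord_recl addn_gt0 fpos //.
have c1 : (1 <= c)%N by rewrite /c; nia.
set C0 := (c%:R : R) ^+ (m - 2) * pp R m n.
set S := \sum_(1 <= d < n.+1) pp R m d.
have C00 : 0 <= C0 by rewrite mulr_ge0 ?exprn_ge0 ?ler0n ?pp_ge0.
apply: (@le_trans _ _ (\sum_(g : {ffun 'I_t -> 'I_n.+1} | valid n t f g)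
   \sum_(i < t) C0 * \prod_(j < t) (if j == i then 1 else pp R m (g j)))).
  apply: ler_sum => g gv.
  have [i Hi] := @exists_big n t f g n1 t1 F1 gv.
  have gi1 : (1 <= g i)%N by move: gv => /andP[_ /forallP]; apply.
  have Q0 : forall k : 'I_t, 0 <= \prod_(j < t) (if j == k then 1 else pp R m (g j)).
    by move=> k; apply: prodr_ge0 => j _; case: eqP => _ //; exact: pp_ge0.
  have -> : \prod_(j < t) pp R m (g j) = pp R m (g i) * \prod_(j < t) (if j == i then 1 else pp R m (g j)).
    rewrite (bigD1 i) // [in RHS](bigD1 i) //= eqxx mul1r; congr (_ * _).
    by apply: eq_bigr => j /negbTE ->.
  rewrite [X in _ <= X](bigD1 i) //=; apply: (@le_trans _ _ (C0 * \prod_(j < t) (if j == i then 1 else pp R m (g j)))).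
    by rewrite ler_wpM2r // /C0 (@pp_big R m n c (g i)).
  by rewrite lerDl; apply: sumr_ge0 => k _; apply: mulr_ge0.
rewrite exchange_big /=.
have -> : t%:R * C0 * S ^+ t.-1 = \sum_(i < t) (C0 * S ^+ t.-1).
  rewrite sumr_const card_ord. by rewrite -mulr_natl; ring.
apply: ler_sum => i _.
rewrite -mulr_sumr ler_wpM2l //.
by apply: sum_off_i; apply: fpos.
Qed.

Lemma mu_bound (R : realType) m n t (f : nat -> nat) : (2 < m)%N -> (1 <= n)%N -> (1 <= t)%N ->
  (forall i, (i < t)%N -> (0 < f i)%N) -> (2 * t.-1 + 3 <= m)%N ->
  mu R m n t f <= t%:R * ((t * \sum_(i < t) f i)%N%:R : R) ^+ (m - 2) * (m%:R ^+ t.-1)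
                   * (uu R m n)^-1.
Proof.
move=> m2 n1 t1 fpos tm.
apply: (le_trans (mu_bound1 R m n t f m2 n1 t1 fpos)).
set C := ((t * \sum_(i < t) f i)%N%:R : R) ^+ (m - 2).
have C0 : 0 <= C by rewrite exprn_ge0.
have u1 := uu_ge1 R m n n1.
have u0 : 0 < uu R m n by apply: lt_le_trans u1.
have S0 : 0 <= \sum_(1 <= d < n.+1) pp R m d by apply: sumr_ge0 => d _; exact: pp_ge0.
have HS := @S1 R m n m2.
have HSt : (\sum_(1 <= d < n.+1) pp R m d) ^+ t.-1 <= (m%:R * uu R m n ^+ 2) ^+ t.-1.
  by rewrite lerXn2r // nnegrE // mulr_ge0 // exprn_ge0 // ltW.
apply: (le_trans (ler_wpM2l _ HSt)).
  by rewrite mulr_ge0 // mulr_ge0 // pp_ge0.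
rewrite exprMn -exprM /pp.
have key : (uu R m n ^+ (m - 2))^-1 * uu R m n ^+ (2 * t.-1) <= (uu R m n)^-1.
  have -> : uu R m n ^+ (m - 2) = uu R m n ^+ (m - 3) * uu R m n.
    by rewrite -exprSr; congr (_ ^+ _); lia.
  have ui : 0 <= (uu R m n)^-1 by rewrite invr_ge0 ltW.
  rewrite invfM mulrAC ler_piMl //.
  rewrite mulrC ler_pdivrMr ?exprn_gt0 // mul1r.
  by apply: ler_weXn2l => //; lia.
rewrite (_ : t%:R * (C / uu R m n ^+ (m - 2)) * (m%:R ^+ t.-1 * uu R m n ^+ (2 * t.-1)) = t%:R * C * m%:R ^+ t.-1 * ((uu R m n ^+ (m - 2))^-1 * uu R m n ^+ (2 * t.-1))); last by ring.
by rewrite ler_wpM2l // mulr_ge0 // ?mulr_ge0 // exprn_ge0.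
Qed.

Definition vals {Q n t} (c : {ffun 'I_Q -> {ffun 'I_t -> 'I_n.+1}}) : seq nat :=
  [seq nat_of_ord (c j i) | j <- enum 'I_Q, i <- enum 'I_t].

Definition cvalid {Q n t} (f : nat -> nat) (c : {ffun 'I_Q -> {ffun 'I_t -> 'I_n.+1}}) : bool :=
  [forall j, valid n t f (c j)] && uniq (vals c).

Lemma prod_vals (R : realType) Q n t (c : {ffun 'I_Q -> {ffun 'I_t -> 'I_n.+1}}) (F : nat -> R) :
  \prod_(x <- vals c) F x = \prod_(j < Q) \prod_(i < t) F (c j i).
Proof.
rewrite /vals big_allpairs_dep /= big_enum /=; apply: eq_bigr => j _.
by rewrite big_enum.
Qed.

Lemma conf_sum (R : realType) m Q n t f :
  \sum_(c : {ffun 'I_Q -> {ffun 'I_t -> 'I_n.+1}} | cvalid f c) \prod_(x <- vals c) pp R m x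
  <= mu R m n t f ^+ Q.
Proof.
under eq_bigr do rewrite prod_vals.
have -> : mu R m n t f ^+ Q = \prod_(j < Q) \sum_(g | valid n t f g) \prod_(i < t) pp R m (g i).
  by rewrite prodr_const card_ord.
rewrite bigA_distr_big.
rewrite big_mkcond [X in _ <= X]big_mkcond /=; apply: ler_sum => c _.
have P0 : 0 <= \prod_(j < Q) \prod_(i < t) pp R m (c j i).
  by apply: prodr_ge0 => j _; apply: prodr_ge0 => i _; exact: pp_ge0.
case: ifP => [/andP[/forallP H _]|_]; last by case: ifP.
by rewrite ifT //; apply/ffun_onP => j; exact: H.
Qed.

Lemma prod_valsE (R : realType) Q n t (c : {ffun 'I_Q -> {ffun 'I_t -> 'I_n.+1}}) (F : nat -> \bar R) :
  (\prod_(x <- vals c) F x = \prod_(j < Q) \prod_(i < t) F (c j i))%E.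
Proof.
rewrite /vals big_allpairs_dep /= big_enum /=; apply: eq_bigr => j _.
by rewrite big_enum.
Qed.

Lemma fin_subadd d (T : measurableType d) (R : realType) (P : probability T R)
  (I : Type) (s : seq I) (p : pred I) (F : I -> set T) :
  (forall i, measurable (F i)) ->
  (P (\big[setU/set0]_(i <- s | p i) F i) <= \sum_(i <- s | p i) P (F i))%E.
Proof.
move=> mF; elim: s => [|x s IH]; first by rewrite !big_nil measure0.
rewrite !big_cons; case: ifP => _ //.
apply: (le_trans (measureU2 _ _ _)) => //.
  by apply: bigsetU_measurable => i _.
exact: leeD.
Qed.

Lemma prob_bound d (T : measurableType d) (R : realType) (P : probability T R) (E : nat -> set T)
  m Q n t f :
  (forall x, measurable (E x)) -> mutually_independent P E ->
  (forall x, (0 < x)%N -> P (E x) = (pp R m x)%:E) ->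
  (P (\big[setU/set0]_(c : {ffun 'I_Q -> {ffun 'I_t -> 'I_n.+1}} | cvalid f c)
        \big[setI/setT]_(x <- vals c) E x) <= (mu R m n t f ^+ Q)%:E)%E.
Proof.
move=> mE indep PE.
apply: (le_trans (fin_subadd _ _ _ P _ _ _ _ _)).
  by move=> c; apply: bigsetI_measurable => x _.
rewrite (eq_bigr (fun c => (\prod_(x <- vals c) pp R m x)%:E)); last first.
  move=> c /andP[/forallP H u]; rewrite indep // prod_valsE prod_vals -prodEFin.
  apply: eq_bigr => j _; rewrite -prodEFin; apply: eq_bigr => i _.
  by rewrite PE //; have /andP[_ /forallP] := H j; apply.
by rewrite sumEFin lee_fin conf_sum.
Qed.

Lemma inj_jt {t j1 j2 i1 i2 : nat} : (i1 < t)%N -> (i2 < t)%N ->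
  (j1 * t + i1 = j2 * t + i2)%N -> j1 = j2 /\ i1 = i2.
Proof.
move=> i1t i2t e.
have ei : i1 = i2.
  have := congr1 (fun x => x %% t)%N e; rewrite /= !modnMDl !modn_small //.
split => //; move: e; rewrite ei => /addIn e.
apply/eqP; rewrite -(eqn_pmul2r (m := t)) ?e //; lia.
Qed.

Lemma build_conf T (E : nat -> set T) (w : T) Q t (f : nat -> nat) n q :
  (1 <= t)%N -> (forall i, (i < t)%N -> (0 < f i)%N) -> (Q <= q)%N ->
  dist_rep [set x | (0 < x)%N /\ E x w] t f n q ->
  exists c : {ffun 'I_Q -> {ffun 'I_t -> 'I_n.+1}},
    cvalid f c /\ (forall x, x \in vals c -> E x w).
Proof.
move=> t1 fpos Qq [dd [inj [Bd sums]]].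
have bound : forall j i, (j < q)%N -> (i < t)%N -> (dd (j * t + i) <= n)%N.
  move=> j i jq it; rewrite -(sums j jq) (bigD1 (Ordinal it)) //=.
  apply: leq_trans (leq_addr _ _); rewrite leq_pmull //; exact: fpos.
have lt_qt : forall (j : 'I_Q) (i : 'I_t), (j * t + i < q * t)%N.
  move=> j i; have := ltn_ord j; have := ltn_ord i; nia.
pose c := [ffun j : 'I_Q => [ffun i : 'I_t => (inord (dd (j * t + i)%N) : 'I_n.+1)]].
have cE : forall j i, (c j i : nat) = dd (j * t + i)%N.
  move=> j i; rewrite !ffunE inordK // ltnS; apply: bound => //.
  exact: leq_trans (ltn_ord j) Qq.
exists c; split; last first.
  move=> x /allpairsP [[j i] [_ _ ->]] /=; rewrite cE.
  by have [] := Bd _ (lt_qt j i).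
apply/andP; split.
  apply/forallP => j; apply/andP; split.
    apply/eqP; under eq_bigr do rewrite cE.
    by apply: sums; exact: leq_trans (ltn_ord j) Qq.
  by apply/forallP => i; rewrite cE; have [] := Bd _ (lt_qt j i).
have -> : vals c = map dd [seq (nat_of_ord j * t + nat_of_ord i)%N | j <- enum 'I_Q, i <- enum 'I_t].
  by rewrite map_allpairs /vals; apply: eq_allpairs => j i; rewrite cE.
rewrite map_inj_in_uniq.
  apply: allpairs_uniq; rewrite ?enum_uniq //.
  move=> [j1 i1] [j2 i2] _ _ /= e.
  have [e1 e2] := inj_jt (ltn_ord i1) (ltn_ord i2) e.
  by congr (_, _); apply: val_inj.
move=> x y /allpairsP [[j1 i1] [_ _ ->]] /allpairsP [[j2 i2] [_ _ ->]] /=.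
by apply: inj; rewrite inE /= lt_qt.
Qed.

Lemma tail_real (R : realType) m (K : R) k : (2 < m)%N -> 0 <= K ->
  \sum_(0 <= n < k) (if (2 <= n)%N then K * (uu R m n ^+ (m + 2))^-1 else 0) <= K * m%:R.
Proof.
move=> m2 K0.
set b := fun n : nat => if (2 <= n)%N then K * (uu R m n ^+ (m + 2))^-1 else 0.
have b0 : forall n, 0 <= b n.
  move=> n; rewrite /b; case: ifP => // _; rewrite mulr_ge0 // invr_ge0 exprn_ge0 //.
  exact: uu_ge0.
apply: (@le_trans _ _ (\sum_(0 <= n < k.+2) b n)).
  rewrite [X in _ <= X](@big_cat_nat _ _ _ k 0 k.+2) //=.
  apply: (@le_trans _ _ (\sum_(0 <= i < k) b i)); first exact: lexx.
  rewrite lerDl; exact: sumr_ge0.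
  lia.
rewrite big_ltn // big_ltn // /b /= add0r add0r.
rewrite (eq_big_nat _ _ (F2 := fun n => K * (uu R m n ^+ (m + 2))^-1)); last first.
  by move=> n /andP[n2 _]; rewrite n2.
rewrite -mulr_sumr ler_wpM2l //.
apply: (le_trans (S2 R m k m2)).
rewrite ler_piMr ?ler0n // lerBlDr lerDl invr_ge0 exprn_ge0 //; exact: uu_ge0.
Qed.

Lemma bigI_in T (F : nat -> set T) (s : seq nat) w :
  (forall x, x \in s -> F x w) -> (\big[setI/setT]_(x <- s) F x) w.
Proof.
elim: s => [|y s IH] H; first by rewrite big_nil.
rewrite big_cons; split; first by apply: H; rewrite mem_head.
by apply: IH => x xs; apply: H; rewrite in_cons xs orbT.
Qed.

Lemma bigU_in (I : finType) T (p : pred I) (G : I -> set T) i w :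
  p i -> G i w -> (\big[setU/set0]_(j | p j) G j) w.
Proof. by move=> pi Gi; rewrite (bigD1 i) //; left. Qed.

Theorem mainTheorem8 (h : nat) (t : nat) (f : nat -> nat)
  (d : measure_display) (T : measurableType d) (R : realType)
  (P : probability T R) (E : nat -> set T) :
  (2 <= h)%N ->
  (1 <= t)%N -> (t <= 2 * h - 1)%N ->
  (forall i, (i < t)%N -> (0 < f i)%N) ->
  (\sum_(i < t) f i <= 2 * h)%N ->
  (forall n, measurable (E n)) ->
  mutually_independent P E ->
  (forall n, (0 < n)%N ->
     P (E n) = ((n%:R : R) `^ (- ((4 * h - 3)%:R / (4 * h - 1)%:R)))%:E) ->
  {ae P, forall w : T,
     exists N : nat, forall n : nat, (N <= n)%N ->
       (RDist [set m | (0 < m)%N /\ E m w] t f n <= 4 * h)%N}.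
Proof.
move=> h2 t1 th fpos Fle mE indep PE.
pose m := (4 * h - 1)%N.
have m2 : (2 < m)%N by rewrite /m; lia.
pose Q := (4 * h).+1.
have Qm : Q = (m + 2)%N by rewrite /Q /m; lia.
have tm : (2 * t.-1 + 3 <= m)%N by rewrite /m; lia.
have PE' : forall x, (0 < x)%N -> P (E x) = (pp R m x)%:E.
  move=> x x0; rewrite PE // /pp -pow_uu; last by rewrite /m; lia.
  by rewrite (_ : (4 * h - 3)%N = (m - 2)%N) //; rewrite /m; lia.
pose K : R := t%:R * ((t * \sum_(i < t) f i)%N%:R : R) ^+ (m - 2) * (m%:R ^+ t.-1).
have K0 : 0 <= K by rewrite /K !mulr_ge0 // exprn_ge0.
pose A := fun n : nat => if (2 <= n)%N then
   \big[setU/set0]_(c : {ffun 'I_Q -> {ffun 'I_t -> 'I_n.+1}} | cvalid f c)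
        \big[setI/setT]_(x <- vals c) E x else set0.
have mA : forall n, measurable (A n).
  move=> n; rewrite /A; case: ifP => // _.
  by apply: bigsetU_measurable => c _; apply: bigsetI_measurable => x _.
pose b := fun n : nat => if (2 <= n)%N then K ^+ Q * (uu R m n ^+ (m + 2))^-1 else 0.
have PA : forall n, (P (A n) <= (b n)%:E)%E.
  move=> n; rewrite /A /b; case: ifP => n2; last by rewrite measure0.
  apply: (le_trans (prob_bound _ _ _ P E m Q n t f mE indep PE')).
  rewrite lee_fin.
  have mu0 : 0 <= mu R m n t f.
    by apply: sumr_ge0 => g _; apply: prodr_ge0 => i _; exact: pp_ge0.
  have := @mu_bound R m n t f m2 (ltnW n2) t1 fpos tm; rewrite -/K => hmu.
  have hK : 0 <= K / uu R m n by rewrite mulr_ge0 // invr_ge0 uu_ge0.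
  apply: (le_trans (lerXn2r Q _ _ hmu)); rewrite ?nnegrE //.
  by rewrite exprMn exprVn Qm.
have Sfin : (\sum_(0 <= n <oo) P (A n) < +oo)%E.
  apply: (@le_lt_trans _ _ ((K ^+ Q * m%:R)%:E)); last exact: ltry.
  apply: lime_le.
    by apply: is_cvg_nneseries => n _ _; exact: measure_ge0.
  apply: nearW => k.
  apply: (@le_trans _ _ (\sum_(0 <= n < k) (b n)%:E)%E).
    by apply: lee_sum => n _; exact: PA.
  rewrite sumEFin lee_fin; apply: tail_real => //.
  exact: exprn_ge0.
have N0 : P (lim_sup_set A) = 0%E := lim_sup_set_cvg0 mA Sfin.
exists (lim_sup_set A); split => //.
  apply: bigcap_measurable; first by exists 0%N.
  move=> k _; apply: bigcup_measurable => j _; exact: mA.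
move=> w /= notQ N _ /=.
apply: contrapT => H.
apply: notQ; exists (maxn N 2) => n Nn.
apply: contrapT => Hn.
have [q [Dq qgt]] : exists q : 'I_n.+1,
    dist_rep [set x | (0 < x)%N /\ E x w] t f n q /\ (4 * h < q)%N.
  apply: contrapT => H2; apply: Hn; apply/bigmax_leqP => q /asboolP Dq.
  rewrite leqNgt; apply/negP => qg; apply: H2; exists q; split => //.
have [c [cv cE]] := @build_conf T E w Q t f n q t1 fpos qgt Dq.
apply: H; exists n; first by rewrite /=; move: Nn; rewrite geq_max => /andP[].
have n2 : (2 <= n)%N by move: Nn; rewrite geq_max => /andP[].
rewrite /A n2; apply: (bigU_in _ _ _ _ c w cv); exact: bigI_in.
Qed.
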